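(* Let $\underline a=\{a_i\}_{i\in I}$ be a pseudo-Cauchy sequence in $K$ such that $I^*$ has no maximum, and such that either $\underline a$ is of transcendental type, or $\underline a$ is of algebraic type with $\gamma_{\underline a}\neq\infty$. Let $g\in K[x]$ be such that every polynomial of degree smaller than $\deg g$ is fixed by $\underline a$. Then $v(g(a_i))=\nu_i(g)$ for all sufficiently large $i\in I^*$.
   Context: $(K,v)$ is a valued field with value group $\Gamma$. A pseudo-Cauchy sequence is $\underline a=\{a_i\}_{i\in I}\subseteq K$ with $I$ a well-ordered set of at least two elements such that $v(a_i-a_j)<v(a_j-a_k)$ whenever $i<j<k$. $I^*=I\setminus\{\max I\}$ if $I$ has a maximum, else $I^*=I$. For $i\in I^*$, $\gamma_i:=v(a_{i+1}-a_i)$ ($i+1$ the successor of $i$) and $\nu_i:=v_{a_i,\gamma_i}$, where $v_{a,\gamma}(\sum_k b_k(x-a)^k)=\min_k\{v(b_k)+k\gamma\}$. A polynomial $f$ is fixed by $\underline a$ if $\{v(f(a_i))\}_{i\in I}$ is ultimately constant. When $I^*$ has no maximum, $\underline a$ is of transcendental type if every $f\in K[x]$ is fixed by $\underline a$, and of algebraic type otherwise. For $\underline a$ of algebraic type, let $F$ be a monic polynomial of smallest degree not fixed by $\underline a$, $D=\{\alpha\in\Gamma_{\mathbb Q}\mid\alpha\le\nu_i(F)\text{ for some }i\in I^*\}$ ($\Gamma_{\mathbb Q}$ the divisible hull of $\Gamma$), and $\gamma_{\underline a}=\infty$ if $D=\Gamma_{\mathbb Q}$, and otherwise $\gamma_{\underline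 a}$ is the element of the universal ordered group realizing the quasi-cut $(D,\Gamma_{\mathbb Q}\setminus D)$ (in particular $\gamma_{\underline a}\neq\infty$ iff $D\neq\Gamma_{\mathbb Q}$). *)

(* Defs.v *)
From HB Require Import structures.
From mathcomp Require Import all_boot all_order all_algebra.
Set Implicit Arguments. Unset Strict Implicit. Unset Printing Implicit Defensive.
Import Order.TTheory GRing.Theory.
Local Open Scope ring_scope.

Record oag (G : zmodType) := OAG {
  ole : G -> G -> bool;
  ole_refl : forall x, ole x x;
  ole_trans : forall x y z, ole x y -> ole y z -> ole x z;
  ole_anti : forall x y, ole x y -> ole y x -> x = y;
  ole_total : forall x y, ole x y || ole y x;
  ole_add : forall x y z, ole x y -> ole (x + z) (y + z) }.

(* G extended with infinity, represented by option G (None = infinity). *)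
Section Ext.
Variables (G : zmodType) (O : oag G).
Definition leE (x y : option G) : bool :=
  match x, y with
  | _, None => true
  | None, Some _ => false
  | Some a, Some b => ole O a b
  end.
Definition ltE (x y : option G) : bool := leE x y && ~~ leE y x.
Definition addE (x y : option G) : option G :=
  match x, y with Some a, Some b => Some (a + b) | _, _ => None end.
Definition minE (x y : option G) : option G := if leE x y then x else y.
End Ext.

Record valuation (K : fieldType) (G : zmodType) (O : oag G) := Valuation {
  vval : K -> option G;
  val_inf : forall x, vval x = None <-> x = 0;
  valM : forall x y, vval (x * y) = addE (vval x) (vval y);
  valD : forall x y, leE O (minE O (vval x) (vval y)) (vval (x + y));
  val_surj : forall g : G, exists x, vval x = Some g }.
Arguments valuation : clear implicits.

Section PCS.
Variables (K : fieldType) (G : zmodType) (O : oag G) (v : valuation K G O).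
Variables (d : Order.disp_t) (I : orderType d) (a : I -> K).

(* v_{c,gamma}(f) = min_k (v(b_k) + k gamma) where f = sum_k b_k (x - c)^k *)
Definition nu (c : K) (gam : G) (f : {poly K}) : option G :=
  let f' := f \Po ('X + c%:P) in
  foldr (minE O) None
    [seq addE (vval v f'`_k) (Some (gam *+ k)) | k <- iota 0 (size f)].

Definition well_ordered : Prop :=
  forall P : I -> Prop, (exists i, P i) ->
    exists i, P i /\ forall j, P j -> (i <= j)%O.

Definition in_Istar (i : I) : Prop := exists j, (i < j)%O.

Definition is_succ (i j : I) : Prop :=
  (i < j)%O /\ forall k, (i < k)%O -> (j <= k)%O.

Definition pseudo_cauchy : Prop :=
  well_ordered /\ (exists i j : I, i != j) /\
  forall i j k, (i < j)%O -> (j < k)%O ->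
    ltE O (vval v (a i - a j)) (vval v (a j - a k)).

Definition Istar_nomax : Prop :=
  forall i, in_Istar i -> exists j, in_Istar j /\ (i < j)%O.

Definition fixed (f : {poly K}) : Prop :=
  exists i0, forall i, (i0 <= i)%O -> vval v f.[a i] = vval v f.[a i0].

Definition transcendental_type : Prop := forall f : {poly K}, fixed f.
Definition algebraic_type : Prop := exists f : {poly K}, ~ fixed f.

Definition minimal_unfixed (F : {poly K}) : Prop :=
  F \is monic /\ ~ fixed F /\
  forall h : {poly K}, h \is monic -> ~ fixed h -> (size F <= size h)%N.

(* Elements of the divisible hull Gamma_Q are represented as formal
   quotients alpha/n with alpha in G, n > 0.  qle alpha n x means
   alpha/n <= x for x in Gamma \cup {infinity}. *)
Definition qle (alpha : G) (n : nat) (x : option G) : bool :=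
  match x with None => true | Some b => ole O alpha (b *+ n) end.

(* D = { alpha in Gamma_Q | alpha <= nu_i(F) for some i in I^* };
   gamma_a <> infinity  iff  D <> Gamma_Q, i.e. some element of Gamma_Q
   is not in D. *)
Definition D_ne_GammaQ (F : {poly K}) : Prop :=
  exists (alpha : G) (n : nat), (0 < n)%N /\
    forall (i j : I) (gam : G), in_Istar i -> is_succ i j ->
      vval v (a j - a i) = Some gam -> ~ qle alpha n (nu (a i) gam F).

Definition gamma_finite : Prop :=
  exists F : {poly K}, minimal_unfixed F /\ D_ne_GammaQ F.

End PCS.

(* Main.v *)
Require Import Defs.
From HB Require Import structures.
From mathcomp Require Import all_boot all_order all_algebra.
From Stdlib Require Import Classical ClassicalEpsilon.
Import Order.TTheory GRing.Theory.
Local Open Scope ring_scope.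
Set Implicit Arguments. Unset Strict Implicit. Unset Printing Implicit Defensive.


Section OG.
Variables (G : zmodType) (O : oag G).
Local Notation le := (ole O).
Definition glt x y := le x y && ~~ le y x.

Lemma gle_refl x : le x x. Proof. exact: ole_refl. Qed.
Lemma gle_trans x y z : le x y -> le y z -> le x z. Proof. exact: ole_trans. Qed.
Lemma gle_total x y : le x y || le y x. Proof. exact: ole_total. Qed.
Lemma gle_anti x y : le x y -> le y x -> x = y. Proof. exact: ole_anti. Qed.
Lemma gleD2r x y z : le (x + z) (y + z) = le x y.
Proof.
apply/idP/idP => H; last exact: ole_add.
by have := ole_add (- z) H; rewrite !addrK.
Qed.
Lemma gleD2l x y z : le (z + x) (z + y) = le x y.
Proof. by rewrite ![z + _]addrC gleD2r. Qed.
Lemma gltD2r x y z : glt (x + z) (y + z) = glt x y.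
Proof. by rewrite /glt !gleD2r. Qed.
Lemma gltD2l x y z : glt (z + x) (z + y) = glt x y.
Proof. by rewrite /glt !gleD2l. Qed.
Lemma gleD x y z w : le x y -> le z w -> le (x + z) (y + w).
Proof.
move=> H1 H2; apply: (gle_trans (y := y + z)); first by rewrite gleD2r.
by rewrite gleD2l.
Qed.
Lemma glt_neq x y : glt x y -> x != y.
Proof. by case/andP=> H1 H2; apply/eqP=> E; move: H2; rewrite E gle_refl. Qed.
Lemma glt_le x y : glt x y -> le x y. Proof. by case/andP. Qed.
Lemma gnle_lt x y : ~~ le x y -> glt y x.
Proof. move=> H; rewrite /glt H andbT; by case/orP: (gle_total x y) => // /(negP H). Qed.
Lemma glt_le_trans x y z : glt x y -> le y z -> glt x z.
Proof.
case/andP=> H1 H2 H3; rewrite /glt (gle_trans H1 H3) /=; apply/negP=> H4.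
by move/negP: H2; apply; apply: gle_trans H3 H4.
Qed.
Lemma gle_lt_trans x y z : le x y -> glt y z -> glt x z.
Proof.
move=> H1 /andP[H2 H3]; rewrite /glt (gle_trans H1 H2) /=; apply/negP=> H4.
by move/negP: H3; apply; apply: gle_trans H4 H1.
Qed.
Lemma glt_trans x y z : glt x y -> glt y z -> glt x z.
Proof. by move=> H1 H2; apply: glt_le_trans H1 (glt_le H2). Qed.
Lemma gltD x y z w : glt x y -> le z w -> glt (x + z) (y + w).
Proof.
move=> H1 H2; apply: (glt_le_trans (y := y + z)); first by rewrite gltD2r.
by rewrite gleD2l.
Qed.
Lemma glt_irr x : ~~ glt x x. Proof. by rewrite /glt gle_refl. Qed.

Lemma gge0_mulrn x k : le 0 x -> le 0 (x *+ k).
Proof.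
move=> H; elim: k => [|k IH]; first by rewrite mulr0n gle_refl.
by rewrite mulrS -[0](addr0 0); apply: gleD.
Qed.
Lemma ggt0_mulrn x k : glt 0 x -> (0 < k)%N -> glt 0 (x *+ k).
Proof.
move=> H; case: k => // k _; rewrite mulrS -[0](addr0 0); apply: gltD => //.
by apply: gge0_mulrn; apply: glt_le.
Qed.
Lemma glt_mulrn2 x k l : glt 0 x -> (k < l)%N -> glt (x *+ k) (x *+ l).
Proof.
move=> H kl; rewrite -(subnKC (ltnW kl)) mulrnDr; rewrite -[X in glt X _]addr0.
by rewrite gltD2l; apply: ggt0_mulrn => //; rewrite subn_gt0.
Qed.
Lemma gle_mulrn x y k : le x y -> le (x *+ k) (y *+ k).
Proof.
move=> H; elim: k => [|k IH]; first by rewrite !mulr0n gle_refl.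
by rewrite !mulrS; apply: gleD.
Qed.
Lemma glt_mulrn x y k : glt x y -> (0 < k)%N -> glt (x *+ k) (y *+ k).
Proof.
move=> H; case: k => // k _; rewrite !mulrS; apply: gltD => //.
by apply: gle_mulrn; apply: glt_le.
Qed.
Lemma glt_sub0 x y : glt x y -> glt 0 (y - x).
Proof. by move=> H; rewrite -(gltD2r _ _ x) add0r subrK. Qed.

Lemma sub4 (A B C D : G) : (C - A) - (D - B) = (B - A) - (D - C).
Proof. by rewrite !opprB addrACA [in RHS]addrACA (addrC B). Qed.

Lemma mulrn_inj_diff x y k l : glt x y -> (k != l)%N ->
  x *+ l - x *+ k != y *+ l - y *+ k.
Proof.
move=> H kl; apply/negP => /eqP E.
have : (y - x) *+ k = (y - x) *+ l.
  rewrite !mulrnBl; apply/eqP; rewrite -subr_eq0 sub4 E subrr //.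
have d0 := glt_sub0 H.
case: (ltngtP k l) kl => // [kl|lk] _ E2.
  by have := glt_neq (glt_mulrn2 d0 kl); rewrite E2 eqxx.
by have := glt_neq (glt_mulrn2 d0 lk); rewrite E2 eqxx.
Qed.

Lemma diff_eq (bk bl xk xl : G) : bk + xk = bl + xl -> xl - xk = bk - bl.
Proof. by move=> E; apply: (addrI bl); rewrite addrA -E addrK [RHS]addrC subrK. Qed.

Local Notation leo := (leE O).
Local Notation lto := (ltE O).
Lemma leo_refl x : leo x x. Proof. by case: x => //= a; apply: gle_refl. Qed.
Lemma leo_trans x y z : leo x y -> leo y z -> leo x z.
Proof. by case: x; case: y; case: z => //= ???; apply: gle_trans. Qed.
Lemma leo_total x y : leo x y || leo y x.
Proof. by case: x; case: y => //= ??; apply: gle_total. Qed.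
Lemma leo_anti x y : leo x y -> leo y x -> x = y.
Proof. by case: x; case: y => //= ?? H1 H2; rewrite (gle_anti H1 H2). Qed.
Lemma leoNone x : leo x None. Proof. by case: x. Qed.
Lemma leNone_eq x : leo None x -> x = None. Proof. by case: x. Qed.
Lemma nleo_lto x y : ~~ leo x y -> lto y x.
Proof. move=> H; rewrite /ltE H andbT; by case/orP: (leo_total x y) => // /(negP H). Qed.
Lemma lto_leo x y : lto x y -> leo x y. Proof. by case/andP. Qed.
Lemma lto_neq x y : lto x y -> x <> y.
Proof. by case/andP=> _ H E; move: H; rewrite E leo_refl. Qed.
Lemma lto_leo_trans x y z : lto x y -> leo y z -> lto x z.
Proof.
case/andP=> H1 H2 H3; rewrite /ltE (leo_trans H1 H3) /=; apply/negP=> H4.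
by move/negP: H2; apply; apply: leo_trans H3 H4.
Qed.
Lemma leo_lto_trans x y z : leo x y -> lto y z -> lto x z.
Proof.
move=> H1 /andP[H2 H3]; rewrite /ltE (leo_trans H1 H2) /=; apply/negP=> H4.
by move/negP: H3; apply; apply: leo_trans H4 H1.
Qed.
Lemma lto_None x y : lto x y -> x <> None. Proof. by case: x; case: y. Qed.
Lemma lto_Some a b : lto (Some a) (Some b) = glt a b. Proof. by []. Qed.
Lemma lto_SomeNone a : lto (Some a) None. Proof. by []. Qed.
Lemma minE_l x y : leo x y -> minE O x y = x. Proof. by rewrite /minE => ->. Qed.
Lemma minE_r x y : leo y x -> minE O x y = y.
Proof. rewrite /minE; case: ifP => // H1 H2; exact: leo_anti. Qed.
Lemma leo_min m x y : leo m (minE O x y) = leo m x && leo m y.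
Proof.
rewrite /minE; case: ifP => H.
  apply/idP/idP => [H1|/andP[]//]; by rewrite H1 (leo_trans H1 H).
apply/idP/idP => [H1|/andP[]//]; rewrite H1 andbT.
case/orP: (leo_total x y) => H2; first by rewrite H2 in H.
exact: leo_trans H1 H2.
Qed.
Lemma minE_None y : minE O None y = y.
Proof. by rewrite /minE; case: y. Qed.
Lemma minE_Nr y : minE O y None = y.
Proof. by rewrite minE_l // leoNone. Qed.

Lemma addEC (x y : option G) : addE x y = addE y x.
Proof. by case: x; case: y => //= ??; rewrite addrC. Qed.
Lemma addE_le x y z : leo x y -> leo (addE x z) (addE y z).
Proof. by case: x; case: y; case: z => //= ???; apply: ole_add. Qed.
Lemma addE_Some_le x y s : leo (addE x (Some s)) (addE y (Some s)) = leo x y.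
Proof. by case: x; case: y => //= ??; rewrite gleD2r. Qed.
Lemma addE_Some_lt x y s : lto (addE x (Some s)) (addE y (Some s)) = lto x y.
Proof. by rewrite /ltE !addE_Some_le. Qed.
Lemma addE_Some_shift m x s : leo m (addE x (Some s)) = leo (addE m (Some (- s))) x.
Proof.
by rewrite -(addE_Some_le _ _ (- s)); case: x => //= a; rewrite addrK.
Qed.

Definition fmin (l : seq (option G)) := foldr (minE O) None l.
Lemma leo_fmin m l : leo m (fmin l) = all (leo m) l.
Proof. elim: l => [|x l IH] /=; first by rewrite leoNone. by rewrite leo_min IH. Qed.
Lemma fmin_le l x : x \in l -> leo (fmin l) x.
Proof. move=> H; have := leo_refl (fmin l); rewrite leo_fmin => /allP; exact. Qed.
Lemma fmin_mem l : fmin l = None \/ fmin l \in l.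
Proof.
elim: l => [|x l IH] /=; first by left.
case/orP: (leo_total x (fmin l)) => H.
  by rewrite minE_l // in_cons eqxx; right.
rewrite minE_r //; case: IH => IH; [by left | by right; rewrite in_cons IH orbT].
Qed.
Lemma fmin_mono (T : eqType) (s : seq T) (x y : T -> option G) :
  (forall k, k \in s -> leo (x k) (y k)) ->
  leo (fmin (map x s)) (fmin (map y s)).
Proof.
move=> H; rewrite leo_fmin; apply/allP => z /mapP [k ks ->].
apply: leo_trans (H k ks); apply: fmin_le; exact: map_f.
Qed.
Lemma fmin_strict (T : eqType) (s : seq T) (x y : T -> option G) :
  (forall k, k \in s -> (x k = None /\ y k = None) \/ lto (x k) (y k)) ->
  fmin (map x s) <> None -> lto (fmin (map x s)) (fmin (map y s)).
Proof.
move=> H xN; case: (fmin_mem (map y s)) => [-> | ].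
  by case: (fmin (map x s)) xN.
set m := fmin _ => /mapP [k ks Ek]; rewrite Ek.
case: (H k ks) => [[xk yk] | lt1].
  move: Ek; rewrite yk /m => Ek.
  by case: (fmin (map x s)) xN.
apply: leo_lto_trans lt1; apply: fmin_le; exact: map_f.
Qed.
End OG.



Section Val.
Variables (K : fieldType) (G : zmodType) (O : oag G) (v : valuation K G O).
Local Notation leo := (leE O).
Local Notation lto := (ltE O).
Local Notation V := (vval v).

Lemma v0 : V 0 = None. Proof. by apply/val_inf. Qed.
Lemma vNone x : V x = None -> x = 0. Proof. by move/val_inf. Qed.
Lemma vSome x : x != 0 -> exists g, V x = Some g.
Proof. move=> H; case E: (V x) => [g|]; first by exists g. by move/vNone: E => E; rewrite E eqxx in H. Qed.
Lemma vM x y : V (x * y) = addE (V x) (V y). Proof. exact: Defs.valM. Qed.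

Lemma double0 (e : G) : e + e = 0 -> e = 0.
Proof.
move=> H; case/orP: (gle_total O 0 e) => H1.
  have H2 : ole O (e + 0) (e + e) by apply: gleD => //; apply: gle_refl.
  by rewrite H addr0 in H2; exact: (gle_anti H2 H1).
have H2 : ole O (e + e) (e + 0) by apply: gleD => //; apply: gle_refl.
by rewrite H addr0 in H2; exact: (gle_anti H1 H2).
Qed.

Lemma v1 : V 1 = Some 0.
Proof.
have [e He] := vSome (oner_neq0 K).
have := vM 1 1; rewrite mulr1 He /= => -[E].
have : e + e = e + 0 by rewrite addr0 -E.
by move/addrI => <-.
Qed.

Lemma vN1 : V (-1) = Some 0.
Proof.
have nz : (-1 : K) != 0 by rewrite oppr_eq0 oner_neq0.
have [e He] := vSome nz.
have := vM (-1) (-1); rewrite mulrNN mulr1 v1 He /= => -[E].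
by rewrite (double0 (esym E)).
Qed.

Lemma vN x : V (- x) = V x.
Proof. by rewrite -mulN1r vM vN1; case: (V x) => //= g; rewrite add0r. Qed.

Lemma vB x y : V (x - y) = V (y - x).
Proof. by rewrite -opprB vN. Qed.

Lemma vD_ge m x y : leo m (V x) -> leo m (V y) -> leo m (V (x + y)).
Proof.
move=> H1 H2; apply: leo_trans (valD v x y).
by rewrite leo_min H1 H2.
Qed.

Lemma vsum_ge (T : eqType) (m : option G) (r : seq T) (F : T -> K) :
  (forall i, i \in r -> leo m (V (F i))) -> leo m (V (\sum_(i <- r) F i)).
Proof.
elim: r => [|x r IH] H; first by rewrite big_nil v0 leoNone.
rewrite big_cons; apply: vD_ge; first by apply: H; rewrite in_cons eqxx.
by apply: IH => i ir; apply: H; rewrite in_cons ir orbT.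
Qed.

Lemma min3_contra a b c : leo (minE O a b) c -> lto c a -> lto c b -> False.
Proof.
rewrite /minE; case: ifP => _ H1 H2 H3.
  by have := lto_leo_trans H2 H1; rewrite /ltE leo_refl andbF.
by have := lto_leo_trans H3 H1; rewrite /ltE leo_refl andbF.
Qed.

Lemma vD_strict x y : lto (V x) (V y) -> V (x + y) = V x.
Proof.
move=> H; have H1 : leo (V x) (V (x + y)).
  by apply: vD_ge; [apply: leo_refl | apply: lto_leo].
case E: (leo (V (x + y)) (V x)); first exact: (leo_anti E H1).
move/negbT/nleo_lto: E => E; exfalso.
have := valD v (x + y) (- y); rewrite addrK vN => H2.
exact: min3_contra H2 E H.
Qed.

Lemma vD_neq x y : V x <> V y -> V (x + y) = minE O (V x) (V y).
Proof.
move=> H; case/orP: (leo_total O (V x) (V y)) => H1.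
  have H2 : lto (V x) (V y) by rewrite /ltE H1 /=; apply/negP => H3; apply: H; exact: leo_anti H1 H3.
  by rewrite vD_strict // minE_l.
have H2 : lto (V y) (V x) by rewrite /ltE H1 /=; apply/negP => H3; apply: H; exact: leo_anti H3 H1.
by rewrite addrC vD_strict // minE_r.
Qed.

Lemma vnat n : leo (Some 0) (V n%:R).
Proof.
elim: n => [|n IH]; first by rewrite v0.
by rewrite -addn1 natrD; apply: vD_ge => //; rewrite v1 leo_refl.
Qed.

Lemma vX x g k : V x = Some g -> V (x ^+ k) = Some (g *+ k).
Proof.
move=> H; elim: k => [|k IH]; first by rewrite expr0 v1 mulr0n.
by rewrite exprS vM H IH /= mulrS.
Qed.

Lemma vMn_ge m x n : leo m (V x) -> leo m (V (x *+ n)).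
Proof.
move=> H; rewrite -mulr_natr vM; apply: leo_trans H _.
case: (V x) => //= g; case E: (V n%:R) => [h|] //=.
have := vnat n; rewrite E /= => H0.
by rewrite -{1}[g]addr0 gleD2l.
Qed.

Lemma vsum_distinct (F : nat -> K) m n :
  (forall k l, k \in iota m n -> l \in iota m n -> k != l ->
     V (F k) = V (F l) -> V (F k) = None) ->
  V (\sum_(k <- iota m n) F k) = fmin O [seq V (F k) | k <- iota m n].
Proof.
elim: n m => [|n IH] m H; first by rewrite big_nil v0.
rewrite /= big_cons.
have sub : forall k, k \in iota m.+1 n -> k \in iota m n.+1.
  by move=> k kr; rewrite /= in_cons kr orbT.
have IH' := IH m.+1 (fun k l kr lr => H k l (sub k kr) (sub l lr)).
have mm : m \in iota m n.+1 by rewrite /= in_cons eqxx.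
set R := \sum_(k <- iota m.+1 n) F k.
case: (eqVneq (V (F m)) (V R)) => E; last by rewrite vD_neq; [rewrite IH' | apply/eqP].
have Fm : V (F m) = None.
  case: (fmin_mem O [seq V (F k) | k <- iota m.+1 n]) => [N|].
    by rewrite E /R IH' N.
  move/mapP => [l lr El]; apply: (H m l mm (sub l lr)).
    by move: lr; rewrite mem_iota; case: eqP => // ->; rewrite ltnn.
  by rewrite E /R IH' El.
have RN : V R = None by rewrite -E.
by rewrite /= Fm minE_None (vNone Fm) add0r RN -IH'.
Qed.

End Val.



Section Poly.
Variable (K : fieldType).

Lemma nderivn_mapC (p : {poly K}) i : (p^:P)^`N(i) = (p^`N(i))^:P.
Proof.
by apply/polyP => j; rewrite coef_nderivn !coef_map /= coef_nderivn polyCMn.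
Qed.

Lemma comp_XaddC_poly (p : {poly K}) c :
  p \Po ('X + c%:P) = \poly_(i < size p) (p^`N(i)).[c].
Proof.
rewrite /comp_poly addrC nderiv_taylor; last exact: mulrC.
rewrite size_map_polyC poly_def; apply: eq_bigr => i _.
by rewrite nderivn_mapC horner_map /= mul_polyC.
Qed.

Lemma coef_comp_XaddC (p : {poly K}) c k :
  (p \Po ('X + c%:P))`_k = (p^`N(k)).[c].
Proof.
rewrite comp_XaddC_poly coef_poly; case: ltnP => // H.
by rewrite nderivn_poly0 // horner0.
Qed.

Lemma size_nderivn (p : {poly K}) k : (size (p^`N(k)) <= size p - k)%N.
Proof. exact: size_poly. Qed.

Lemma size_comp_XaddC (p : {poly K}) c : size (p \Po ('X + c%:P)) = size p.
Proof. by rewrite size_comp_poly2 // size_XaddC. Qed.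

Lemma horner_comp_XaddC (p : {poly K}) c y :
  p.[y] = (p \Po ('X + c%:P)).[y - c].
Proof. by rewrite horner_comp hornerD hornerX hornerC subrK. Qed.

Lemma comp_XaddC_trans (p : {poly K}) a b :
  p \Po ('X + b%:P) = (p \Po ('X + a%:P)) \Po ('X + (b - a)%:P).
Proof.
rewrite -comp_polyA comp_polyD comp_polyX comp_polyC -addrA -polyCD.
by rewrite addrC subrK addrC.
Qed.
End Poly.

Section Inv.
Variables (K : fieldType) (G : zmodType) (O : oag G) (v : valuation K G O).
Local Notation leo := (leE O).
Local Notation lto := (ltE O).
Local Notation V := (vval v).

Definition Wn (gam : G) (N : nat) (p : {poly K}) :=
  fmin O [seq addE (V p`_k) (Some (gam *+ k)) | k <- iota 0 N].

Lemma nuE c gam f : nu v c gam f = Wn gam (size f) (f \Po ('X + c%:P)).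
Proof. by []. Qed.

Lemma Wn_le gam N (p : {poly K}) m : (size p <= N)%N ->
  leo (Wn gam N p) (addE (V p`_m) (Some (gam *+ m))).
Proof.
move=> sp; case: (ltnP m N) => mN.
  by apply: fmin_le; apply: map_f; rewrite mem_iota.
by rewrite nth_default ?v0 ?leoNone //; apply: leq_trans mN.
Qed.

Lemma addE_mono2 a b c d : leo a b -> leo c d -> leo (addE a c) (addE b d).
Proof.
move=> H1 H2; apply: leo_trans (addE_le c H1) _.
by rewrite addEC [addE b d]addEC; apply: addE_le.
Qed.

Lemma addE_shift2 W x a b : leo W (addE x (Some (a + b))) ->
  leo (addE W (Some (- a))) (addE x (Some b)).
Proof.
case: W; case: x => //= x w H.
by rewrite -(gleD2r O _ _ a) subrK -addrA [b + a]addrC.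
Qed.

Lemma vX_ge gam d l : leo (Some gam) (V d) -> leo (Some (gam *+ l)) (V (d ^+ l)).
Proof.
case: (eqVneq d 0) => [->|nz].
  by case: l => [|l]; rewrite ?expr0 ?v1 ?mulr0n ?leo_refl // expr0n v0.
have [g Hg] := vSome v nz; rewrite Hg (vX l Hg) /= => H.
exact: gle_mulrn.
Qed.

Lemma Wn_inv gam d N (p : {poly K}) : leo (Some gam) (V d) -> (size p <= N)%N ->
  leo (Wn gam N p) (Wn gam N (p \Po ('X + d%:P))).
Proof.
move=> Hd sp; rewrite {2}/Wn leo_fmin; apply/allP => z /mapP [k _ ->].
rewrite coef_comp_XaddC horner_coef addE_Some_shift.
apply: vsum_ge => l _; rewrite coef_nderivn vM.
have := Wn_le gam (k + l) sp; rewrite mulrnDr => H.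
apply: leo_trans (addE_shift2 H) _.
apply: addE_mono2; first by apply: vMn_ge; apply: leo_refl.
exact: vX_ge.
Qed.

Lemma Wn_eq gam d N (p : {poly K}) : V d = Some gam -> (size p <= N)%N ->
  Wn gam N (p \Po ('X + d%:P)) = Wn gam N p.
Proof.
move=> Hd sp; apply: leo_anti; last by apply: Wn_inv => //; rewrite Hd leo_refl.
set q := p \Po _.
have E : p = q \Po ('X + (- d)%:P).
  by rewrite /q -comp_polyA comp_polyD comp_polyX comp_polyC -addrA -polyCD addNr addr0 comp_polyXr.
rewrite [X in leo _ (Wn _ _ X)]E; apply: Wn_inv; first by rewrite vN Hd leo_refl.
by rewrite size_comp_XaddC.
Qed.
End Inv.



Section Seq.
Variables (K : fieldType) (G : zmodType) (O : oag G) (v : valuation K G O).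
Variables (d : Order.disp_t) (I : orderType d) (a : I -> K).
Local Notation leo := (leE O).
Local Notation lto := (ltE O).
Local Notation V := (vval v).

Hypothesis PC : forall i j k, (i < j)%O -> (j < k)%O ->
    lto (V (a i - a j)) (V (a j - a k)).
Hypothesis NM : Istar_nomax I.
Hypothesis ne : exists i : I, in_Istar i.
Variable nx : I -> I.
Hypothesis nxP : forall i, in_Istar i -> (i < nx i)%O.

Definition ev (P : I -> Prop) :=
  exists i0, in_Istar i0 /\ forall i, in_Istar i -> (i0 <= i)%O -> P i.

Lemma ev_and P Q : ev P -> ev Q -> ev (fun i => P i /\ Q i).
Proof.
move=> [i0 [H0 P0]] [i1 [H1 Q1]].
case: (leP i0 i1) => H.
  exists i1; split => // i Hi Hle; split; [apply: P0 => //; exact: le_trans Hle | exact: Q1].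
exists i0; split => // i Hi Hle; split; [exact: P0 | apply: Q1 => //].
by apply: le_trans Hle; apply: ltW.
Qed.

Lemma ev_impl (P Q : I -> Prop) : ev P -> (forall i, in_Istar i -> P i -> Q i) -> ev Q.
Proof. by move=> [i0 [H0 P0]] H; exists i0; split => // i Hi Hle; apply: H => //; apply: P0. Qed.

Lemma ev_all (P : nat -> I -> Prop) N :
  (forall k, (k < N)%N -> ev (P k)) -> ev (fun i => forall k, (k < N)%N -> P k i).
Proof.
elim: N => [|N IH] H.
  by case: ne => i0 Hi0; exists i0; split.
have H1 := IH (fun k kN => H k (ltnW kN)).
have H2 := H N (ltnSn N).
apply: (ev_impl (ev_and H1 H2)) => i _ [A B] k.
by rewrite ltnS leq_eqVlt; case/orP => [/eqP -> //|]; apply: A.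
Qed.

Lemma gam_same i j j' : (i < j)%O -> (i < j')%O -> V (a j - a i) = V (a j' - a i).
Proof.
wlog: j j' / (j <= j')%O => [W H1 H2|].
  by case: (leP j j') => H; [exact: W | apply/esym/W => //; apply: ltW].
rewrite le_eqVlt; case/orP => [/eqP -> //| H12] H1 H2.
have := PC H1 H12; rewrite vB [V (a j - a j')]vB => H.
have -> : a j' - a i = (a j - a i) + (a j' - a j) by rewrite [RHS]addrC addrA subrK.
by rewrite (vD_strict H).
Qed.

Definition gam i := V (a (nx i) - a i).

Lemma gam_eq i j : in_Istar i -> (i < j)%O -> V (a j - a i) = gam i.
Proof. by move=> Hi Hj; apply: gam_same => //; apply: nxP. Qed.

Lemma gam_fin i : in_Istar i -> gam i <> None.
Proof.
move=> Hi; have [j [Hj ij]] := NM Hi.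
have := PC ij (nxP Hj); rewrite vB (gam_eq Hi ij) => H.
exact: lto_None H.
Qed.

Definition gG i := odflt 0 (gam i).

Lemma gamE i : in_Istar i -> gam i = Some (gG i).
Proof. by move/gam_fin; rewrite /gG; case: (gam i). Qed.

Lemma gG_lt i i' : in_Istar i -> in_Istar i' -> (i < i')%O -> glt O (gG i) (gG i').
Proof.
move=> Hi Hi' ii'; rewrite -lto_Some -gamE // -gamE //.
have := PC ii' (nxP Hi'); rewrite vB (gam_eq Hi ii').
by rewrite vB.
Qed.

Lemma ev_distinct (beta : nat -> option G) k l :
  ev (fun i => (k != l)%N ->
     addE (beta k) (Some (gG i *+ k)) = addE (beta l) (Some (gG i *+ l)) ->
     addE (beta k) (Some (gG i *+ k)) = None).
Proof.
set T := fun i m => addE (beta m) (Some (gG i *+ m)).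
case: (classic (exists i, in_Istar i /\ (k != l)%N /\ T i k = T i l /\ T i k <> None))
  => [[i [Hi [kl [E NN]]]] | Hn].
  have [j [Hj ij]] := NM Hi.
  exists j; split => // i' Hi' ji' _ E'.
  case: (eqVneq (T i' k) None) => // NN'; exfalso.
  have ii' : (i < i')%O by apply: lt_le_trans ij ji'.
  have glt := gG_lt Hi Hi' ii'.
  move: E E' NN NN'; rewrite /T; case: (beta k) => [bk|] //; case: (beta l) => [bl|] //=.
  move=> [E] [E'] _ _.
  by have := mulrn_inj_diff glt kl; rewrite (diff_eq E) (diff_eq E') eqxx.
case: ne => i0 H0; exists i0; split => // i Hi _ kl E.
case: (eqVneq (T i k) None) => // NN; exfalso; apply: Hn.
by exists i; split => //; split => //; split => //; apply/eqP.
Qed.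

Lemma ev_distinct_all (beta : nat -> option G) N :
  ev (fun i => forall k l, (k < N)%N -> (l < N)%N -> (k != l)%N ->
     addE (beta k) (Some (gG i *+ k)) = addE (beta l) (Some (gG i *+ l)) ->
     addE (beta k) (Some (gG i *+ k)) = None).
Proof.
pose P k l i := (k != l)%N ->
     addE (beta k) (Some (gG i *+ k)) = addE (beta l) (Some (gG i *+ l)) ->
     addE (beta k) (Some (gG i *+ k)) = None.
have H1 : forall k, (k < N)%N -> ev (fun i => forall l, (l < N)%N -> P k l i).
  by move=> k _; apply: (@ev_all (P k)) => l _; apply: ev_distinct.
have H := @ev_all (fun k i => forall l, (l < N)%N -> P k l i) N H1.
by apply: (ev_impl H) => i _ H' k l kN lN; apply: H'.
Qed.
End Seq.



Section Main.
Variables (K : fieldType) (G : zmodType) (O : oag G) (v : valuation K G O).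
Variables (d : Order.disp_t) (I : orderType d) (a : I -> K).
Local Notation leo := (leE O).
Local Notation lto := (ltE O).
Local Notation V := (vval v).

Hypothesis PC : forall i j k, (i < j)%O -> (j < k)%O ->
    lto (V (a i - a j)) (V (a j - a k)).
Hypothesis NM : Istar_nomax I.
Hypothesis ne : exists i : I, in_Istar i.
Variable nx : I -> I.
Hypothesis nxP : forall i, in_Istar i -> (i < nx i)%O.

Local Notation ev := (ev (I := I)).
Local Notation gG := (gG v a nx).

Lemma case1 (M : I) (g : {poly K}) : (forall i, (i <= M)%O) ->
  ev (fun i => V g.[a i] = nu v (a i) (gG i) g).
Proof.
move=> HM.
set c := a M; set C := g \Po ('X + c%:P); set n := size g.
have D := ev_distinct_all PC NM ne nxP (fun k => V C`_k) n.
apply: (ev_impl D) => i Hi Hd.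
have iM : (i < M)%O by case: Hi => j ij; apply: lt_le_trans ij (HM j).
have Vh : V (a i - c) = Some (gG i).
  by rewrite vB /c (gam_eq PC nxP Hi iM) (gamE PC NM nxP Hi).
rewrite nuE (comp_XaddC_trans g c (a i)) -/C Wn_eq //; last by rewrite size_comp_XaddC.
rewrite (horner_comp_XaddC g c (a i)) -/C horner_coef size_comp_XaddC -/n.
rewrite -(big_mkord xpredT (fun k => C`_k * (a i - c) ^+ k)) /index_iota subn0 vsum_distinct.
  by congr fmin; apply: eq_map => k; rewrite vM (vX k Vh).
move=> k l; rewrite !mem_iota /= !add0n => kn ln kl.
by rewrite !vM (vX k Vh) (vX l Vh); apply: Hd.
Qed.

Lemma case2 (g : {poly K}) : (forall i : I, in_Istar i) -> g != 0 ->
  (forall f : {poly K}, (size f < size g)%N -> fixed v a f) ->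
  ev (fun i => V g.[a i] = nu v (a i) (gG i) g).
Proof.
move=> allI gnz Hfix.
set n := size g.
have n0 : (0 < n)%N by rewrite size_poly_gt0.
have iotaE : iota 0 n = 0%N :: iota 1 n.-1 by rewrite -{1}(prednK n0).
pose t k (x : K) := (g^`N(k)).[x].
pose stable k i := forall j, (i <= j)%O -> V (t k (a j)) = V (t k (a i)).
have Hst : forall k, (k < n)%N -> ev (fun i => (0 < k)%N -> stable k i).
  move=> k kn; case: (posnP k) => [->|kp].
    by case: ne => i0 H0; exists i0; split.
  have sk : (size (g^`N(k)) < size g)%N.
    apply: leq_ltn_trans (size_nderivn g k) _.
    by rewrite -/n ltn_subrL kp n0.
  have [i0 Hi0] := Hfix _ sk.
  exists i0; split => // i _ i0i _ j ij.
  by rewrite /t (Hi0 j (le_trans i0i ij)) (Hi0 i i0i).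
have [L [HL stL]] := ev_all ne Hst.
pose beta k := V (t k (a L)).
have Hbeta : forall i, (L <= i)%O -> forall k, (k < n)%N -> (0 < k)%N ->
    V (t k (a i)) = beta k.
  by move=> i Li k kn kp; apply: (stL L HL (le_refl L) k kn kp i Li).
have D := ev_distinct_all PC NM ne nxP beta n.
have EL : ev (fun i => (L <= i)%O) by exists L; split.
have [L3 [HL3 P3]] := ev_and EL D.
pose T i k := addE (V (t k (a i))) (Some (gG i *+ k)).
pose Mi i := fmin O [seq T i k | k <- iota 1 n.-1].
have Fa : forall i, nu v (a i) (gG i) g = minE O (V g.[a i]) (Mi i).
  move=> i; rewrite nuE /Wn -/n iotaE /= coef_comp_XaddC nderivn0 mulr0n.
  rewrite /Mi; congr (minE O _ _); first by case: (V _) => //= x; rewrite addr0.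
  by congr fmin; apply: eq_map => k; rewrite coef_comp_XaddC.
have Fb : forall i j, (L3 <= i)%O -> (i < j)%O -> V (g.[a j] - g.[a i]) = Mi i.
  move=> i j L3i ij.
  have [Li Hd] := P3 i (allI i) L3i.
  have Vh : V (a j - a i) = Some (gG i).
    by rewrite (gam_eq PC nxP (allI i) ij) (gamE PC NM nxP (allI i)).
  have -> : a j = a i + (a j - a i) by rewrite addrC subrK.
  rewrite nderiv_taylor; last exact: mulrC.
  rewrite -/n -(big_mkord xpredT (fun k => (g^`N(k)).[a i] * (a j - a i) ^+ k)).
  rewrite /index_iota subn0 iotaE big_cons nderivn0 expr0 mulr1 addrC addKr.
  rewrite vsum_distinct.
    by rewrite /Mi; congr fmin; apply: eq_map => k; rewrite vM (vX k Vh).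
  move=> k l; rewrite !mem_iota => /andP [k1 kn] /andP [l1 ln] kl.
  rewrite add1n (prednK n0) in kn ln.
  rewrite !vM (vX k Vh) (vX l Vh) -/(t k (a i)) -/(t l (a i)) !Hbeta //.
  by apply: Hd.
have Fc : forall i j, (L3 <= i)%O -> (i < j)%O -> forall k, k \in iota 1 n.-1 ->
    (T i k = None /\ T j k = None) \/ lto (T i k) (T j k).
  move=> i j L3i ij k; rewrite mem_iota add1n (prednK n0) => /andP [kp kn].
  have [Li _] := P3 i (allI i) L3i.
  have Lj : (L <= j)%O by apply: le_trans Li (ltW ij).
  rewrite /T -/(t k (a i)) -/(t k (a j)) !Hbeta //.
  case: (beta k) => [b|]; last by left.
  right; rewrite /= lto_Some gltD2l; apply: glt_mulrn => //.
  have := (gG_lt PC NM nxP (allI i) (allI j) ij). exact.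
have Fmono : forall i j, (L3 <= i)%O -> (i < j)%O -> leo (Mi i) (Mi j).
  move=> i j L3i ij; apply: fmin_mono => k kr.
  by case: (Fc i j L3i ij k kr) => [[-> ->]|/lto_leo] //.
have Fstrict : forall i j, (L3 <= i)%O -> (i < j)%O -> Mi i <> None -> lto (Mi i) (Mi j).
  by move=> i j L3i ij; apply: fmin_strict; apply: Fc.
case: (classic (exists i0, (L3 <= i0)%O /\ lto (V g.[a i0]) (Mi i0))) => [[i0 [L3i0 Hi0]]|Hn].
  exists i0; split; first exact: allI.
  move=> i _ i0i; rewrite Fa minE_l //.
  case: (eqVneq i0 i) => [<-|ne0]; first exact: lto_leo.
  have i0lt : (i0 < i)%O by rewrite lt_neqAle ne0.
  have -> : g.[a i] = g.[a i0] + (g.[a i] - g.[a i0]) by rewrite addrC subrK.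
  rewrite vD_strict; last by rewrite Fb.
  apply: leo_trans (lto_leo Hi0) _; exact: Fmono.
have HB : forall i, (L3 <= i)%O -> leo (Mi i) (V g.[a i]).
  move=> i L3i; case E: (leo (Mi i) (V g.[a i])) => //; exfalso.
  by apply: Hn; exists i; split => //; apply: nleo_lto; rewrite E.
exists L3; split => // i _ L3i; rewrite Fa minE_l //.
case E: (leo (V g.[a i]) (Mi i)) => //; exfalso.
have lt1 : lto (Mi i) (V g.[a i]) by apply: nleo_lto; rewrite E.
have [j [_ ij]] := NM (allI i).
have L3j : (L3 <= j)%O by apply: le_trans L3i (ltW ij).
have Vj : V g.[a j] = Mi i.
  have -> : g.[a j] = (g.[a j] - g.[a i]) + g.[a i] by rewrite subrK.
  by rewrite vD_strict Fb.
have := HB j L3j; rewrite Vj => H1.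
have H2 := Fstrict i j L3i ij (lto_None lt1).
by move: (leo_lto_trans H1 H2); rewrite /ltE leo_refl andbF.
Qed.
End Main.


Unset Implicit Arguments.

Theorem lemma5p7 (K : fieldType) (G : zmodType) (O : oag G)
  (v : valuation K G O) (d : Order.disp_t) (I : orderType d) (a : I -> K)
  (g : {poly K}) :
  pseudo_cauchy v a ->
  Istar_nomax I ->
  (transcendental_type v a \/ (algebraic_type v a /\ gamma_finite v a)) ->
  (forall f : {poly K}, (size f < size g)%N -> fixed v a f) ->
  exists i0 : I, in_Istar i0 /\
    forall (i j : I) (gam : G), in_Istar i -> (i0 <= i)%O -> is_succ i j ->
      vval v (a j - a i) = Some gam ->
      vval v g.[a i] = nu v (a i) gam g.
Proof.
move=> [_ [[i1 [j1 ij1]] PC]] NM _ Hfix.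
have ne : exists i : I, in_Istar i.
  case: (ltgtP i1 j1) => H; [by exists i1; exists j1 | by exists j1; exists i1 | by rewrite H eqxx in ij1].
have Hc : forall i : I, exists j, in_Istar i -> (i < j)%O.
  by move=> i; case: (classic (in_Istar i)) => [[j H]|H]; [exists j | exists i].
pose nx i := proj1_sig (constructive_indefinite_description _ (Hc i)).
have nxP : forall i, in_Istar i -> (i < nx i)%O.
  by move=> i; rewrite /nx; case: (constructive_indefinite_description _ _).
case: (eqVneq g 0) => [->|gnz].
  case: ne => i0 H0; exists i0; split => // i j gam _ _ _ _.
  by rewrite horner0 v0 /nu size_poly0.
suff [i0 [H0 P]] : ev (fun i => vval v g.[a i] = nu v (a i) (gG v a nx i) g).
  exists i0; split => // i j gam Hi i0i [ij _] Hg.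
  have := gam_eq PC nxP Hi ij; rewrite Hg (gamE PC NM nxP Hi) => -[->].
  exact: P.
case: (classic (exists M : I, forall i, (i <= M)%O)) => [[M HM]|HnM].
  have H := case1 PC NM ne nxP g HM. exact H.
have allI : forall i : I, in_Istar i.
  move=> i; apply: NNPP => Hi; apply: HnM; exists i => j.
  by rewrite leNgt; apply/negP => H; apply: Hi; exists j.
have H := case2 PC NM ne nxP allI gnz Hfix. exact H.
Qed.
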